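(* Let $N\ge3$ and $p>p_{\rm S}$. Suppose $y^*$ is a solution, defined on $(-\infty,T]$ for some $T\in\mathbb{R}$, of $$y''+\alpha y'-y+y^p+B_0(t)y^p+B_1(t)y=0,\qquad y(t)\to1\ \text{as }t\to-\infty.$$ Then $y^*(t)=1+O(e^{2mt})$ as $t\to-\infty$.
   Context: $p_{\rm S}=\frac{N+2}{N-2}$, $\mu=\frac{2}{p-1}$, $a=\{\mu(N-2-\mu)\}^{\mu/2}$, $m=a^{-(p-1)/2}$, $\alpha=m(N-2-2\mu)$, $q=\frac{N-2}{2}(p-p_{\rm S})$, $B_0(t)=(1+e^{2mt})^q-1$, $B_1(t)=\frac{N(N-2)e^{2mt}}{(1+e^{2mt})^2}$. *)

(* Defs.v *)
From Stdlib Require Import Reals.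
Open Scope R_scope.

Definition pS (N : nat) : R := (INR N + 2) / (INR N - 2).
Definition mu (p : R) : R := 2 / (p - 1).
Definition a_const (N : nat) (p : R) : R :=
  Rpower (mu p * (INR N - 2 - mu p)) (mu p / 2).
Definition m_const (N : nat) (p : R) : R :=
  Rpower (a_const N p) (- (p - 1) / 2).
Definition alpha_const (N : nat) (p : R) : R :=
  m_const N p * (INR N - 2 - 2 * mu p).
Definition q_const (N : nat) (p : R) : R := (INR N - 2) / 2 * (p - pS N).
Definition B0_fun (N : nat) (p t : R) : R :=
  Rpower (1 + exp (2 * m_const N p * t)) (q_const N p) - 1.
Definition B1_fun (N : nat) (p t : R) : R :=
  INR N * (INR N - 2) * exp (2 * m_const N p * t)
  / (1 + exp (2 * m_const N p * t)) ^ 2.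

(* Main.v *)
Require Import Defs.
From Stdlib Require Import Reals Lra Psatz.
Open Scope R_scope.
Lemma nonincr f f' a : (forall t, t <= a -> derivable_pt_lim f t (f' t)) ->
  (forall t, t <= a -> f' t <= 0) -> forall s t, s <= t -> t <= a -> f t <= f s.
Proof.
  intros Hd Hn s t Hst Hta.
  destruct (Req_dec s t) as [->|Hne]; [lra|].
  destruct (MVT_cor2 f f' s t) as [c [Hc Hc2]]; [lra| intros; apply Hd; lra |].
  assert (f' c <= 0) by (apply Hn; lra). nra.
Qed.

Lemma exp_le x y : x <= y -> exp x <= exp y.
Proof. intros [H|H]. left; apply exp_increasing; auto. subst; lra. Qed.

Lemma mul_nonpos a b : a <= 0 -> 0 <= b -> a * b <= 0.
Proof. intros. rewrite <- (Rmult_0_l b). apply Rmult_le_compat_r; lra. Qed.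
Lemma Dl_eq f x l l' : derivable_pt_lim f x l -> l = l' -> derivable_pt_lim f x l'.
Proof. intros H ->; exact H. Qed.
Lemma D_mult f g x a b : derivable_pt_lim f x a -> derivable_pt_lim g x b ->
  derivable_pt_lim (fun t => f t * g t) x (a * g x + f x * b).
Proof. intros; apply (derivable_pt_lim_mult f g); auto. Qed.
Lemma D_plus f g x a b : derivable_pt_lim f x a -> derivable_pt_lim g x b ->
  derivable_pt_lim (fun t => f t + g t) x (a + b).
Proof. intros; apply (derivable_pt_lim_plus f g); auto. Qed.
Lemma D_minus f g x a b : derivable_pt_lim f x a -> derivable_pt_lim g x b ->
  derivable_pt_lim (fun t => f t - g t) x (a - b).
Proof. intros; apply (derivable_pt_lim_minus f g); auto. Qed.
Lemma D_const c x : derivable_pt_lim (fun _ => c) x 0.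
Proof. apply derivable_pt_lim_const. Qed.
Lemma D_id x : derivable_pt_lim (fun t => t) x 1.
Proof. apply derivable_pt_lim_id. Qed.
Lemma D_exp c x : derivable_pt_lim (fun t => exp (c * t)) x (c * exp (c * x)).
Proof. eapply Dl_eq.
    apply (derivable_pt_lim_comp (fun t => c * t) exp).
    eapply Dl_eq. apply (D_mult (fun _ => c) (fun t => t)). apply D_const. apply D_id. reflexivity.
    apply derivable_pt_lim_exp. simpl. ring. Qed.
Ltac dauto := repeat first [ eassumption | apply D_exp | apply D_minus | apply D_mult | apply D_plus | apply D_const | apply D_id ].

Lemma bound_deriv (z w w' : R -> R) t1 al M : 0 < al -> 0 < M ->
  (forall t, t <= t1 -> derivable_pt_lim z t (w t)) ->
  (forall t, t <= t1 -> derivable_pt_lim w t (w' t)) ->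
  (forall t, t <= t1 -> w' t + al * w t <= M) ->
  (forall s t, s <= t1 -> t <= t1 -> z t - z s <= 1) ->
  forall t, t <= t1 -> w t <= M / al.
Proof.
  intros Hal HM Hz Hw Hh Hb t Ht.
  destruct (Rle_dec (w t) (M/al)) as [|Hn]; auto. exfalso.
  assert (Hmono : forall s, s <= t -> (w t - M/al) * exp (al * t) <= (w s - M/al) * exp (al * s)).
  { intros s Hs.
    apply (nonincr (fun s => (w s - M/al) * exp (al * s)) (fun s => (w' s + al * w s - M) * exp (al * s)) t); [ | | exact Hs | lra ].
    - intros u Hu. eapply Dl_eq. dauto. apply Hw; lra. cbv beta. field. lra.
    - intros u Hu. assert (w' u + al * w u - M <= 0) by (pose proof (Hh u); lra).
      apply mul_nonpos; [lra| left; apply exp_pos]. }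
  assert (Hpos : forall s, s <= t -> M/al < w s).
  { intros s Hs. pose proof (Hmono s Hs). pose proof (exp_pos (al*t)). pose proof (exp_pos (al*s)).
    assert (0 < (w t - M/al) * exp (al * t)) by (apply Rmult_lt_0_compat; lra).
    destruct (Rle_dec (w s) (M/al)); [|lra].
    assert ((w s - M / al) * exp (al * s) <= 0). { apply mul_nonpos; lra. } lra. }
  set (s := t - 2 * al / M).
  assert (Hs : s < t). { unfold s. assert (0 < 2*al/M) by (apply Rdiv_lt_0_compat; lra). lra. }
  destruct (MVT_cor2 z w s t) as [c [Hc Hc2]]; [lra| intros; apply Hz; lra |].
  pose proof (Hpos c ltac:(lra)). pose proof (Hb s t ltac:(lra) ltac:(lra)).
  assert (M/al * (t - s) = 2). { unfold s. field. split; lra. }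
  assert (M/al * (t-s) < w c * (t - s)) by (apply Rmult_lt_compat_r; lra).
  lra.
Qed.

Lemma rem_bound p eps : 0 < eps -> exists d, 0 < d /\ d <= 1/2 /\
  forall z, Rabs z <= d -> Rabs (Rpower (1+z) p - 1 - p*z) <= eps * Rabs z.
Proof.
  intros He.
  pose proof (derivable_pt_lim_power 1 p Rlt_0_1) as H.
  assert (H1 : forall y, Rpower 1 y = 1) by (intro; unfold Rpower; rewrite ln_1, Rmult_0_r; apply exp_0).
  rewrite H1, Rmult_1_r in H.
  destruct (H eps He) as [del Hdel].
  exists (Rmin (del/2) (1/2)). pose proof (cond_pos del).
  split; [apply Rmin_pos; lra|]. split; [apply Rmin_r|].
  intros z Hz.
  destruct (Req_dec z 0) as [->|Hz0].
  - rewrite Rplus_0_r, H1. rewrite Rabs_R0. replace (1 - 1 - p*0) with 0 by ring. rewrite Rabs_R0. lra.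
  - assert (Hzd : Rabs z < del). { apply Rle_lt_trans with (Rmin (del/2) (1/2)); auto. pose proof (Rmin_l (del/2) (1/2)). lra. }
    pose proof (Hdel z Hz0 Hzd) as Hq. rewrite H1 in Hq.
    replace (Rpower (1 + z) p - 1 - p * z) with (z * ((Rpower (1 + z) p - 1) / z - p)) by (field; auto).
    rewrite Rabs_mult, Rmult_comm. apply Rmult_le_compat_r. apply Rabs_pos. lra.
Qed.
Lemma ln_le x y : 0 < x -> x <= y -> ln x <= ln y.
Proof. intros H [H1|H1]. left; apply ln_increasing; auto. subst; lra. Qed.
Lemma B1b n E : 3 <= n -> 0 < E -> 0 <= n*(n-2)*E/(1+E)^2 <= n*(n-2)*E.
Proof.
  intros Hn HE. assert (0 < n*(n-2)*E) by (apply Rmult_lt_0_compat; nra).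
  assert (1 <= (1+E)^2) by nra.
  split. apply Rlt_le, Rdiv_lt_0_compat; nra.
  unfold Rdiv. rewrite <- (Rmult_1_r (n*(n-2)*E)) at 2. apply Rmult_le_compat_l. lra.
  rewrite <- Rinv_1. apply Rinv_le_contravar; lra.
Qed.
Lemma B0b q E : 0 < q -> 0 < E -> E <= 1 -> 0 <= Rpower (1+E) q - 1 <= q * exp q * E.
Proof.
  intros Hq HE HE1. unfold Rpower.
  assert (L0 : 0 <= ln (1+E)) by (rewrite <- ln_1; apply ln_le; lra).
  assert (L1 : ln (1+E) <= E).
  { rewrite <- (ln_exp E) at 2. apply ln_le. lra. apply exp_ineq1_le. }
  set (x := q * ln (1+E)).
  assert (0 <= x) by (unfold x; nra). assert (x <= q*E) by (unfold x; nra).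
  split. pose proof (exp_ineq1_le x). lra.
  assert (exp x - 1 <= x * exp x).
  { pose proof (exp_ineq1_le (-x)). pose proof (exp_pos x).
    assert (exp (-x) * exp x = 1) by (rewrite <- exp_plus; replace (-x+x) with 0 by ring; apply exp_0). nra. }
  assert (exp x <= exp q) by (apply exp_le; nra).
  pose proof (exp_pos x). nra.
Qed.
Lemma key_ineq al be mu L eps C0 c K w z r E V :
 0<al -> 0<be -> 0<mu -> mu<=al -> mu<=al*be -> 0 < L -> eps*(1+al) = mu/4 -> c = mu/(2*L) ->
 K = (4+al*al)*C0*C0/mu -> 0 <= C0 -> 0 <= E -> 0<=eps ->
 Rabs r <= eps*Rabs z + C0*E -> V <= L*(w*w+z*z) -> 0 <= V ->
 -al*(w*w) - al*be*(z*z) + (2*w+al*z)*r + c*V - K*(E*E) <= 0.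
Proof.
  intros Hal Hbe Hmu Hma Hmab HL Heps Hc HK0 HC0 HE Hep Hr HV HV0.
  set (aw := Rabs w). set (az := Rabs z).
  assert (Hw2 : w*w = aw*aw) by (unfold aw; rewrite <- Rabs_mult; rewrite Rabs_right; nra).
  assert (Hz2 : z*z = az*az) by (unfold az; rewrite <- Rabs_mult; rewrite Rabs_right; nra).
  assert (Haw : 0 <= aw) by apply Rabs_pos. assert (Haz : 0 <= az) by apply Rabs_pos.
  assert (H1 : (2*w+al*z)*r <= (2*aw+al*az)*(eps*az + C0*E)).
  { apply Rle_trans with (Rabs ((2*w+al*z)*r)). apply Rle_abs.
    rewrite Rabs_mult. apply Rmult_le_compat. apply Rabs_pos. apply Rabs_pos.
    apply Rle_trans with (Rabs (2*w) + Rabs (al*z)). apply Rabs_triang.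
    rewrite !Rabs_mult. rewrite (Rabs_right 2) by lra. rewrite (Rabs_right al) by lra. unfold aw, az; lra. assumption. }
  assert (S1 : (2*aw+al*az)*(eps*az) <= mu/4*(aw*aw+az*az)).
  { rewrite <- Heps. assert (2*aw*az <= aw*aw+az*az) by (pose proof (Rle_0_sqr (aw-az)); unfold Rsqr in *; lra). assert (H2: (2*aw+al*az)*(eps*az) = eps*(2*aw*az) + eps*al*(az*az)) by ring. rewrite H2. assert (eps*(2*aw*az) <= eps*(aw*aw+az*az)) by (apply Rmult_le_compat_l; lra). assert (eps*al*(az*az) <= eps*al*(aw*aw+az*az)). { apply Rmult_le_compat_l. nra. nra. } nra. }
  assert (S2 : 2*aw*(C0*E) <= mu/4*(aw*aw) + 4*C0*C0/mu*(E*E)).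
  { assert (0 <= mu/4*((aw - 4/mu*C0*E)*(aw - 4/mu*C0*E))).
    { apply Rmult_le_pos. lra. apply Rle_0_sqr. }
    replace (mu/4*(aw*aw) + 4*C0*C0/mu*(E*E)) with (mu/4*((aw - 4/mu*C0*E)*(aw - 4/mu*C0*E)) + 2*aw*(C0*E)) by (field; lra).
    lra. }
  assert (S3 : al*az*(C0*E) <= mu/4*(az*az) + al*al*C0*C0/mu*(E*E)).
  { assert (0 <= mu/4*((az - 2*al/mu*C0*E)*(az - 2*al/mu*C0*E))).
    { apply Rmult_le_pos. lra. apply Rle_0_sqr. }
    replace (mu/4*(az*az) + al*al*C0*C0/mu*(E*E)) with (mu/4*((az - 2*al/mu*C0*E)*(az - 2*al/mu*C0*E)) + al*az*(C0*E)) by (field; lra).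
    lra. }
  assert (HK : K*(E*E) = 4*C0*C0/mu*(E*E) + al*al*C0*C0/mu*(E*E)) by (rewrite HK0; field; lra).
  assert (HcV : c*V <= mu/2*(aw*aw+az*az)).
  { rewrite Hc. rewrite <- Hw2, <- Hz2.
    apply Rle_trans with (mu/(2*L)*(L*(w*w+z*z))). apply Rmult_le_compat_l. apply Rlt_le, Rdiv_lt_0_compat; lra. assumption.
    right; field; lra. }
  assert (Hd : mu*(aw*aw+az*az) <= al*(w*w) + al*be*(z*z)).
  { rewrite Hw2, Hz2. nra. }
  nra.
Qed.

Lemma sq_nonneg x : 0 <= x*x.
Proof. pose proof (Rle_0_sqr x); unfold Rsqr in *; lra. Qed.
Lemma abs_le_inv x b : Rabs x <= b -> -b <= x <= b.
Proof. unfold Rabs; destruct (Rcase_abs x); lra. Qed.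

Theorem lemma4p1 (N : nat) (p T : R) (y y1 y2 : R -> R) :
  (3 <= N)%nat ->
  pS N < p ->
  (* y is a positive C^2 solution on (-oo, T] (the ODE imposed for t < T) *)
  (forall t, t <= T -> 0 < y t) ->
  (forall t, t < T -> derivable_pt_lim y t (y1 t)) ->
  (forall t, t < T -> derivable_pt_lim y1 t (y2 t)) ->
  (forall t, t < T ->
     y2 t + alpha_const N p * y1 t - y t + Rpower (y t) p
     + B0_fun N p t * Rpower (y t) p + B1_fun N p t * y t = 0) ->
  (* y(t) -> 1 as t -> -oo *)
  (forall eps, 0 < eps -> exists t0, forall t, t <= t0 -> Rabs (y t - 1) < eps) ->
  (* y(t) = 1 + O(e^{2 m t}) as t -> -oo *)
  exists C t0, forall t, t <= t0 ->
    Rabs (y t - 1) <= C * exp (2 * m_const N p * t).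
Proof.
  intros HN Hp Hpos Hd1 Hd2 Hode Hlim.
  set (n := INR N).
  assert (Hn : 3 <= n) by (unfold n; replace 3 with (INR 3) by (simpl; ring); apply le_INR; exact HN).
  assert (Hp1 : n + 2 < p*(n-2)).
  { unfold pS in Hp; fold n in Hp. assert (E: (n+2)/(n-2)*(n-2) = n+2) by (field; lra).
    assert ((n+2)/(n-2)*(n-2) < p*(n-2)) by (apply Rmult_lt_compat_r; lra). lra. }
  assert (Hb : 0 < p - 1) by nra.
  set (m := m_const N p).
  assert (Hm : 0 < m) by (unfold m, m_const, Rpower; apply exp_pos).
  set (al := alpha_const N p).
  assert (Hal : 0 < al).
  { unfold al, alpha_const, mu. fold m n. apply Rmult_lt_0_compat; [lra|].
    assert (E : 2/(p-1)*(p-1) = 2) by (field; lra). nra. }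
  set (q := q_const N p).
  assert (Hq : 0 < q) by (unfold q, q_const; fold n; apply Rmult_lt_0_compat; lra).
  set (be := p - 1).
  set (mu0 := Rmin al (al*be)).
  assert (Hmu : 0 < mu0) by (apply Rmin_pos; unfold be; nra).
  assert (Hma : mu0 <= al) by apply Rmin_l.
  assert (Hmab : mu0 <= al*be) by apply Rmin_r.
  set (L := 1 + al + be + al*al).
  assert (HL : 0 < L) by (unfold L, be; nra).
  set (eps := mu0/(4*(1+al))).
  assert (Heps : 0 < eps) by (apply Rdiv_lt_0_compat; lra).
  assert (Heps2 : eps*(1+al) = mu0/4) by (unfold eps; field; lra).
  destruct (rem_bound p eps Heps) as [d [Hd0 [Hd12 Hrem]]].
  destruct (Hlim d Hd0) as [t0 Ht0].
  set (t1 := Rmin t0 (Rmin (T-1) 0)).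
  assert (Ht1 : forall t, t <= t1 -> t <= t0 /\ t < T /\ t <= 0).
  { intros t H; unfold t1 in H. pose proof (Rmin_l t0 (Rmin (T-1) 0)). pose proof (Rmin_r t0 (Rmin (T-1) 0)).
    pose proof (Rmin_l (T-1) 0). pose proof (Rmin_r (T-1) 0). lra. }
  set (P := 1 + p + eps).
  set (C0 := P*(q*exp q) + 2*(n*(n-2))).
  assert (HC0 : 0 <= C0). { unfold C0, P. pose proof (exp_pos q). assert (0 <= q*exp q) by nra. nra. }
  set (E := fun t => exp (2*m*t)).
  assert (HE : forall t, t <= t1 -> 0 < E t <= 1).
  { intros t Ht. destruct (Ht1 t Ht) as [_ [_ H]]. unfold E. split. apply exp_pos.
    rewrite <- exp_0. apply exp_le. nra. }
  assert (Hz : forall t, t <= t1 -> Rabs (y t - 1) <= d).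
  { intros t Ht. destruct (Ht1 t Ht) as [H _]. left; apply Ht0; auto. }
  assert (Hr : forall t, t <= t1 -> Rabs (y2 t + al*y1 t + be*(y t - 1)) <= eps * Rabs (y t - 1) + C0 * E t).
  { intros t Ht. destruct (Ht1 t Ht) as [Ha [Hb' Hc]].
    pose proof (Hode t Hb') as H. fold al in H.
    assert (HB0 : B0_fun N p t = Rpower (1 + E t) q - 1) by reflexivity.
    assert (HB1 : B1_fun N p t = n*(n-2)*E t/(1+E t)^2) by reflexivity.
    rewrite HB0, HB1 in H.
    destruct (HE t Ht) as [HE0 HE1].
    pose proof (B0b q (E t) Hq HE0 HE1) as [B0l B0u].
    pose proof (B1b n (E t) Hn HE0) as [B1l B1u].
    pose proof (Hz t Ht) as Hzt.
    assert (Hzd : Rabs (y t - 1) <= 1/2) by lra.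
    pose proof (Hrem (y t - 1) Hzt) as HR.
    replace (1 + (y t - 1)) with (y t) in HR by ring.
    set (z := y t - 1) in *.
    set (Y := Rpower (y t) p) in *.
    set (B0 := Rpower (1 + E t) q - 1) in *.
    set (B1 := n*(n-2)*E t/(1+E t)^2) in *.
    set (az := Rabs z) in *.
    assert (Haz : 0 <= az) by apply Rabs_pos.
    apply abs_le_inv in HR. apply abs_le_inv in Hzt.
    assert (Hyt : y t = 1 + z) by (unfold z; ring).
    assert (HzA : -az <= z <= az) by (apply abs_le_inv; unfold az; lra).
    assert (Hpz : -(p*az) <= p*z <= p*az) by (split; nra).
    assert (Hpa : p*az <= p*(1/2)) by (apply Rmult_le_compat_l; lra).
    assert (Hea : eps*az <= eps*(1/2)) by (apply Rmult_le_compat_l; lra).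
    assert (HY : -P <= Y <= P). { unfold P. split; lra. }
    assert (Hr' : y2 t + al * y1 t + be * z = -(Y - 1 - p*z) - B0*Y - B1*(y t)).
    { unfold be. rewrite Hyt in H |- *. lra. }
    rewrite Hr'. apply Rabs_le.
    assert (-(q*exp q*E t)*P <= B0*Y <= (q*exp q*E t)*P) by (split; nra).
    assert (0 <= B1 * y t <= 2*(n*(n-2)*E t)) by (split; nra).
    unfold C0. split; nra. }
  set (M := eps + C0 + be + 1).
  assert (HM : 0 < M) by (unfold M, be; lra).
  assert (Hh : forall t, t <= t1 -> Rabs (y2 t + al * y1 t) <= M - 1).
  { intros t Ht. pose proof (Hr t Ht). pose proof (Hz t Ht). destruct (HE t Ht).
    apply abs_le_inv in H. apply abs_le_inv in H0.
    assert (H3 : Rabs (y t - 1) <= 1/2) by (apply Rabs_le; lra).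
    assert (eps * Rabs (y t - 1) <= eps * (1/2)) by (apply Rmult_le_compat_l; lra).
    assert (C0 * E t <= C0 * 1) by (apply Rmult_le_compat_l; lra).
    pose proof (abs_le_inv _ _ H3).
    assert (Hbe : 0 < be) by (unfold be; lra).
    assert (-(be*(1/2)) <= be * (y t - 1) <= be*(1/2)) by (split; nra).
    apply Rabs_le. unfold M. split; lra. }
  assert (Hzz : forall s t, s <= t1 -> t <= t1 -> y t - y s <= 1).
  { intros s t Hs Ht. pose proof (abs_le_inv _ _ (Hz s Hs)). pose proof (abs_le_inv _ _ (Hz t Ht)). lra. }
  assert (Hw1 : forall t, t <= t1 -> y1 t <= M / al).
  { apply (bound_deriv y y1 y2 t1 al M Hal HM).
    - intros t Ht; apply Hd1; apply Ht1; auto.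
    - intros t Ht; apply Hd2; apply Ht1; auto.
    - intros t Ht. pose proof (abs_le_inv _ _ (Hh t Ht)). lra.
    - exact Hzz. }
  assert (Hw2 : forall t, t <= t1 -> - y1 t <= M / al).
  { apply (bound_deriv (fun t => - y t) (fun t => - y1 t) (fun t => - y2 t) t1 al M Hal HM).
    - intros t Ht. exact (derivable_pt_lim_opp y t (y1 t) (Hd1 t (proj1 (proj2 (Ht1 t Ht))))).
    - intros t Ht. exact (derivable_pt_lim_opp y1 t (y2 t) (Hd2 t (proj1 (proj2 (Ht1 t Ht))))).
    - intros t Ht. pose proof (abs_le_inv _ _ (Hh t Ht)). lra.
    - intros s t Hs Ht. pose proof (Hzz t s Ht Hs). lra. }
  set (g := be + al*al/2).
  set (V := fun t => y1 t * y1 t + al*((y t - 1)*y1 t) + g*((y t - 1)*(y t - 1))).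
  assert (HVb : forall t, 0 <= V t <= L * (y1 t * y1 t + (y t - 1)*(y t - 1))).
  { intros t. unfold V, g, L. set (w := y1 t). set (z := y t - 1).
    split.
    - assert (V0 : w*w + al*(z*w) + (be+al*al/2)*(z*z) = (w + al*z/2)*(w+al*z/2) + (be + al*al/4)*(z*z)) by field.
      replace (al * (z * w)) with (al*(z*w)) by ring. rewrite V0.
      assert (0 <= (w + al*z/2)*(w+al*z/2)) by apply sq_nonneg.
      assert (0 <= (be + al*al/4)*(z*z)) by (apply Rmult_le_pos; [unfold be; nra| apply sq_nonneg]). lra.
    - assert (0 <= al/2*((w-z)*(w-z))) by (apply Rmult_le_pos; [lra|apply sq_nonneg]).
      assert (0 <= (be + al/2 + al*al)*(w*w)) by (apply Rmult_le_pos; [unfold be; nra| apply sq_nonneg]).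
      assert (0 <= (1 + al/2 + al*al/2)*(z*z)) by (apply Rmult_le_pos; [nra| apply sq_nonneg]).
      assert (EQ : (1 + al + be + al*al) * (w*w + z*z) - (w * w + al * (z * w) + (be + al * al / 2) * (z * z))
        = al/2*((w-z)*(w-z)) + (be + al/2 + al*al)*(w*w) + (1 + al/2 + al*al/2)*(z*z)) by field.
      lra. }
  set (c := mu0/(2*L)).
  assert (Hc : 0 < c) by (apply Rdiv_lt_0_compat; lra).
  set (K := (4+al*al)*C0*C0/mu0).
  assert (HK : 0 <= K). { unfold K. apply Rmult_le_pos; [|left; apply Rinv_0_lt_compat; lra]. nra. }
  set (k := 4*m + c).
  set (K' := K/k).
  assert (HK' : 0 <= K') by (unfold K'; apply Rmult_le_pos; [lra| left; apply Rinv_0_lt_compat; unfold k; lra]).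
  set (G := fun t => V t * exp (c*t) - K' * exp (k*t)).
  assert (HG : forall s t, s <= t -> t <= t1 -> G t <= G s).
  { apply (nonincr G (fun t => (2 * y1 t * y2 t + al * (y1 t * y1 t + (y t - 1) * y2 t) + g * (2 * (y t - 1) * y1 t) + c * V t) * exp (c*t) - K' * k * exp (k * t))).
    - intros t Ht. pose proof (Hd1 t (proj1 (proj2 (Ht1 t Ht)))). pose proof (Hd2 t (proj1 (proj2 (Ht1 t Ht)))).
      unfold G, V. eapply Dl_eq. dauto. cbv beta. ring.
    - intros t Ht. destruct (HE t Ht) as [HE0 HE1].
      assert (Hek : exp (k*t) = exp (c*t) * (E t * E t)).
      { unfold k, E. rewrite <- !exp_plus. f_equal. ring. }
      assert (HKk : K' * k = K) by (unfold K', k; field; lra).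
      rewrite Hek, <- Rmult_assoc, HKk.
      pose proof (key_ineq al be mu0 L eps C0 c K (y1 t) (y t - 1) (y2 t + al*y1 t + be*(y t - 1)) (E t) (V t)
        Hal ltac:(unfold be; lra) Hmu Hma Hmab HL Heps2 eq_refl eq_refl HC0 ltac:(lra) ltac:(lra) (Hr t Ht)
        (proj2 (HVb t)) (proj1 (HVb t))) as Hk.
      match goal with |- ?X <= 0 => assert (EQ2 : X = exp (c*t) * (- al * (y1 t * y1 t) - al * be * ((y t - 1) * (y t - 1)) + (2 * y1 t + al * (y t - 1)) * (y2 t + al * y1 t + be * (y t - 1)) + c * V t - K * (E t * E t))) by (unfold g; field) end.
      rewrite EQ2.
      rewrite Rmult_comm. apply mul_nonpos. lra. left; apply exp_pos. }
  set (Vm := L * ((M/al)*(M/al) + 1)).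
  assert (HVm : 0 < Vm) by (unfold Vm; pose proof (Rle_0_sqr (M/al)); unfold Rsqr in *; nra).
  assert (HGs : forall s, s <= t1 -> G s <= Vm * exp (c*s)).
  { intros s Hs. unfold G. pose proof (exp_pos (k*s)). pose proof (exp_pos (c*s)).
    assert (V s <= Vm).
    { apply Rle_trans with (L * (y1 s * y1 s + (y s - 1) * (y s - 1))). apply HVb.
      unfold Vm. apply Rmult_le_compat_l. lra.
      pose proof (Hw1 s Hs). pose proof (Hw2 s Hs). pose proof (abs_le_inv _ _ (Hz s Hs)).
      assert (0 < M/al) by (apply Rdiv_lt_0_compat; lra). nra. }
    assert (0 <= K' * exp (k*s)) by nra. nra. }
  assert (HG0 : forall t, t <= t1 -> G t <= 0).
  { intros t Ht. destruct (Rle_dec (G t) 0) as [|Hn0]; auto. exfalso.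
    set (s := Rmin t ((ln (G t / Vm) - 1)/c)).
    assert (Hst : s <= t) by apply Rmin_l.
    assert (Hs2 : s <= (ln (G t / Vm) - 1)/c) by apply Rmin_r.
    assert (HGV : 0 < G t / Vm) by (apply Rdiv_lt_0_compat; lra).
    assert (c * s <= ln (G t / Vm) - 1).
    { apply Rle_trans with (c * ((ln (G t / Vm) - 1)/c)). apply Rmult_le_compat_l; lra. right; field; lra. }
    assert (exp (c*s) <= exp (ln (G t / Vm) - 1)) by (apply exp_le; auto).
    unfold Rminus in H0. rewrite exp_plus, exp_ln in H0 by auto.
    assert (exp (-1) < 1) by (rewrite <- exp_0; apply exp_increasing; lra).
    assert (exp (c*s) < G t / Vm) by (apply Rle_lt_trans with (G t / Vm * exp (-1)); [auto| nra]).
    pose proof (HG s t Hst Ht). pose proof (HGs s ltac:(lra)).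
    assert (Vm * exp (c*s) < Vm * (G t / Vm)) by (apply Rmult_lt_compat_l; auto).
    replace (Vm * (G t / Vm)) with (G t) in H5 by (field; lra). lra. }
  set (D := K' / be).
  assert (HD : 0 <= D) by (unfold D, be; apply Rmult_le_pos; [lra| left; apply Rinv_0_lt_compat; lra]).
  exists (D + 1), t1. intros t Ht.
  pose proof (HG0 t Ht) as HGt. unfold G in HGt.
  assert (Hek : exp (k*t) = exp (c*t) * (E t * E t)).
  { unfold k, E. rewrite <- !exp_plus. f_equal. ring. }
  rewrite Hek in HGt. pose proof (exp_pos (c*t)).
  assert (HVt : V t <= K' * (E t * E t)).
  { apply (Rmult_le_reg_r (exp (c*t))); auto. lra. }
  assert (Hbz : be * ((y t - 1)*(y t - 1)) <= V t).
  { unfold V, g. set (w := y1 t). set (z := y t - 1).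
    assert (0 <= (w + al*z/2)*(w+al*z/2)) by apply sq_nonneg. assert (0 <= al*al/4*(z*z)) by (apply Rmult_le_pos; [nra|apply sq_nonneg]).
    assert (EQ : w*w + al*(z*w) + (be+al*al/2)*(z*z) - be*(z*z) = (w + al*z/2)*(w+al*z/2) + al*al/4*(z*z)) by field.
    lra. }
  destruct (HE t Ht) as [HE0 HE1].
  assert (Hz2 : (y t - 1) * (y t - 1) <= D * (E t * E t)).
  { unfold D. apply (Rmult_le_reg_l be). unfold be; lra.
    replace (be * (K' / be * (E t * E t))) with (K' * (E t * E t)) by (field; unfold be; lra). lra. }
  set (az := Rabs (y t - 1)).
  assert (Haz : az * az = (y t - 1) * (y t - 1)) by (unfold az; rewrite <- Rabs_mult; apply Rabs_right; apply Rle_ge, sq_nonneg).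
  assert (0 <= az) by apply Rabs_pos.
  change (exp (2 * m * t)) with (E t).
  destruct (Rle_dec az ((D+1) * E t)) as [|Hn0]; auto. exfalso.
  assert (H0E : 0 <= (D+1)*E t) by (apply Rmult_le_pos; lra).
  assert ((D+1)*E t * ((D+1)*E t) < az * az) by (apply Rmult_le_0_lt_compat; lra).
  assert (HEE : 0 <= E t * E t) by apply sq_nonneg.
  assert (D * (E t * E t) <= (D+1)*E t * ((D+1)*E t)).
  { replace ((D+1)*E t * ((D+1)*E t)) with ((D*D + 2*D + 1) * (E t * E t)) by ring.
    apply Rmult_le_compat_r; nra. }
  lra.
Qed.
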